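(* Let $n\ge4$, let $V$ be an inner product space over $\mathbb{K}\in\{\mathbb{R},\mathbb{C}\}$, let $x_1,\dots,x_n\in V$, and set $x_{n+1}=x_1$. For $1\le i<j\le n$ let $$c_{ij}=\sum_{r=0}^{2}(-1)^{r+1}\binom{n-j+i-1}{2-r}\binom{j-i-1}{r}.$$ Then $$\binom{n-2}{2}\sum_{i=1}^n\|x_i-x_{i+1}\|^2=\sum_{\substack{1\le i<j\le n\\ 1<j-i<n-1}}c_{ij}\|x_i-x_j\|^2+\sum_{1\le i<j<k<l\le n}\|x_i-x_j+x_k-x_l\|^2.$$
   Context: $\|v\|=\sqrt{(v,v)}$ denotes the norm induced by the inner product of $V$. Binomial coefficients $\binom{a}{b}$ are $0$ when $b>a$ or $b<0$. *)

(* Defs.v *)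
From HB Require Import structures.
From mathcomp Require Import all_boot all_order all_algebra.
From mathcomp Require Import reals.
From mathcomp Require Import complex.
Set Implicit Arguments. Unset Strict Implicit. Unset Printing Implicit Defensive.
Import Order.TTheory GRing.Theory Num.Theory.
Local Open Scope ring_scope.

(* Scalar field K in {R, C}: K = R (b = false) or K = R[i] (b = true), R : realType. *)
Definition Kfield (R : realType) (b : bool) : numFieldType :=
  if b then Num.NumField.clone (complex R) _ else Num.NumField.clone R _.

Definition sconj (R : realType) (b : bool) : Kfield R b -> Kfield R b :=
  match b as b return Kfield R b -> Kfield R b with
  | true => fun z : complex R => (z^*)%C
  | false => fun z : R => z
  end.

Definition sre (R : realType) (b : bool) : Kfield R b -> R :=
  match b as b return Kfield R b -> R with
  | true => fun z : complex R => complex.Re z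
  | false => fun z : R => z
  end.

Record is_inner_product (R : realType) (b : bool) (V : lmodType (Kfield R b))
    (ip : V -> V -> Kfield R b) : Prop := {
  ip_linear : forall (a : Kfield R b) (x y z : V), ip (a *: x + y) z = a * ip x z + ip y z;
  ip_conj_sym : forall x y : V, ip y x = sconj (ip x y);
  ip_pos : forall x : V, x != 0 -> 0 < ip x x
}.

(* induced norm ||v|| = sqrt((v,v)) (the value (v,v) is real) *)
Definition ipnorm (R : realType) (b : bool) (V : lmodType (Kfield R b))
    (ip : V -> V -> Kfield R b) (v : V) : R := Num.sqrt (sre (ip v v)).

Definition cij (R : realType) (n i j : nat) : R :=
  \sum_(r < 3) (-1) ^+ r.+1 * ('C(n - j + i - 1, 2 - r))%:R * ('C(j - i - 1, r))%:R.

(* Main.v *)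
Require Import Defs.
From HB Require Import structures.
From mathcomp Require Import all_boot all_order all_algebra.
From mathcomp Require Import reals.
From mathcomp Require Import complex.
From mathcomp Require Import ring lra zify.
Import Order.TTheory GRing.Theory Num.Theory.
Local Open Scope ring_scope.
Set Implicit Arguments. Unset Strict Implicit.

Section Sums.
Variable R : realType.
Definition W N a b : R := ('C(N - b.+1, 2))%:R + ('C(a - 1, 2))%:R + ('C(b - a.+1, 2))%:R
  + ((a - 1) * (N - b.+1))%:R - ((b - a.+1) * (N - b.+1))%:R - ((a - 1) * (b - a.+1))%:R.



Lemma exch_tri (g : nat -> nat -> R) lo N :
  \sum_(lo <= j < N) \sum_(j.+1 <= k < N) g j k
  = \sum_(lo <= k < N) \sum_(lo <= j < k) g j k.
Proof.
elim: N => [|N IH]; first by rewrite !big_geq.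
case: (leqP lo N) => HN; last by rewrite !big_geq.
rewrite big_nat_recr //= [in RHS]big_nat_recr //= [X in _ + X]big_geq // addr0.
rewrite -IH.
rewrite (eq_big_nat _ _ (F2 := fun j => \sum_(j.+1 <= k < N) g j k + g j N)).
  by rewrite big_split.
by move=> j /andP[_ Hj]; rewrite big_nat_recr.
Qed.

Lemma sum_one lo hi : \sum_(lo <= k < hi) (1 : R) = (hi - lo)%:R.
Proof. by rewrite sumr_const_nat. Qed.

Lemma sum_C2 lo hi : \sum_(lo <= k < hi) ((hi - k.+1)%:R : R) = ('C(hi - lo, 2))%:R.
Proof.
move: {2}(hi - lo)%N (erefl (hi - lo)%N) => d; elim: d lo => [|d IH] lo Hd.
  rewrite big_geq; last lia. by have ->: (hi - lo = 0)%N by lia.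
rewrite big_ltn; last lia.
rewrite IH; last lia.
have ->: (hi - lo.+1 = d)%N by lia.
by rewrite Hd binS bin1 natrD addrC.
Qed.

Lemma sum_constR a N (c : R) : \sum_(a <= l < N) c = (N - a)%:R * c.
Proof. by rewrite sumr_const_nat mulr_natl. Qed.

Definition Q4 (h : nat -> nat -> nat -> nat -> R) N :=
  \sum_(1 <= i < N) \sum_(i.+1 <= j < N) \sum_(j.+1 <= k < N) \sum_(k.+1 <= l < N) h i j k l.
Definition S2 (w : nat -> nat -> R) N := \sum_(1 <= a < N) \sum_(a.+1 <= b < N) w a b.

Variable F : nat -> nat -> R.

Lemma P12 N : Q4 (fun i j k l => F i j) N = S2 (fun a b => ('C(N - b.+1, 2))%:R * F a b) N.
Proof.
apply: eq_bigr => i _; apply: eq_bigr => j _.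
under eq_bigr => k _ do rewrite sum_constR.
by rewrite -mulr_suml sum_C2.
Qed.

Lemma P34 N : Q4 (fun i j k l => F k l) N = S2 (fun a b => ('C(a - 1, 2))%:R * F a b) N.
Proof.
rewrite /Q4.
under eq_bigr => i _ do rewrite exch_tri.
rewrite exch_tri /S2; apply: eq_bigr => k _.
under eq_bigr => i _ do rewrite sum_constR.
by rewrite -mulr_suml sum_C2 mulr_sumr.
Qed.

Lemma P14 N : Q4 (fun i j k l => F i l) N = S2 (fun a b => ('C(b - a.+1, 2))%:R * F a b) N.
Proof.
apply: eq_bigr => i _.
under eq_bigr => j _ do rewrite exch_tri.
rewrite exch_tri; apply: eq_bigr => l _.
under eq_bigr => j _ do rewrite sum_constR.
by rewrite -mulr_suml sum_C2.
Qed.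

Lemma P13 N : Q4 (fun i j k l => F i k) N
  = S2 (fun a b => ((b - a.+1) * (N - b.+1))%:R * F a b) N.
Proof.
apply: eq_bigr => i _.
under eq_bigr => j _ do under eq_bigr => k _ do rewrite sum_constR.
rewrite exch_tri; apply: eq_bigr => k _.
by rewrite sum_constR natrM mulrA.
Qed.

Lemma P23 N : Q4 (fun i j k l => F j k) N
  = S2 (fun a b => ((a - 1) * (N - b.+1))%:R * F a b) N.
Proof.
rewrite /Q4.
under eq_bigr => i _ do under eq_bigr => j _ do under eq_bigr => k _ do rewrite sum_constR.
rewrite exch_tri; apply: eq_bigr => j _.
rewrite sum_constR mulr_sumr; apply: eq_bigr => k _.
by rewrite natrM mulrA.
Qed.

Lemma P24 N : Q4 (fun i j k l => F j l) N
  = S2 (fun a b => ((a - 1) * (b - a.+1))%:R * F a b) N.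
Proof.
rewrite /Q4.
under eq_bigr => i _ do under eq_bigr => j _ do rewrite exch_tri.
under eq_bigr => i _ do under eq_bigr => j _ do under eq_bigr => l _ do rewrite sum_constR.
rewrite exch_tri; apply: eq_bigr => j _.
rewrite sum_constR mulr_sumr; apply: eq_bigr => k _.
by rewrite natrM mulrA.
Qed.

Lemma Q4lin (h1 h2 h3 h4 h5 h6 : nat -> nat -> nat -> nat -> R) N :
  Q4 (fun i j k l => h1 i j k l + h2 i j k l + h3 i j k l + h4 i j k l - h5 i j k l - h6 i j k l) N
  = Q4 h1 N + Q4 h2 N + Q4 h3 N + Q4 h4 N - Q4 h5 N - Q4 h6 N.
Proof.
rewrite /Q4 -!big_split -!sumrB; apply: eq_bigr => i _.
rewrite -!big_split -!sumrB; apply: eq_bigr => j _.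
rewrite -!big_split -!sumrB; apply: eq_bigr => k _.
by rewrite -!big_split -!sumrB.
Qed.

Lemma S2lin (h1 h2 h3 h4 h5 h6 : nat -> nat -> R) N :
  S2 h1 N + S2 h2 N + S2 h3 N + S2 h4 N - S2 h5 N - S2 h6 N =
  S2 (fun a b => h1 a b + h2 a b + h3 a b + h4 a b - h5 a b - h6 a b) N.
Proof.
rewrite /S2 -!big_split -!sumrB; apply: eq_bigr => i _.
by rewrite -!big_split -!sumrB.
Qed.

Lemma Q4comb N : Q4 (fun i j k l => F i j + F k l + F i l + F j k - F i k - F j l) N
  = S2 (fun a b => W N a b * F a b) N.
Proof.
rewrite Q4lin P12 P34 P14 P23 P13 P24 S2lin.
apply: eq_bigr => a _; apply: eq_bigr => b _.
by rewrite /W !mulrBl !mulrDl.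
Qed.
End Sums.

Section IP.
Variable R : realType.

Lemma sreD (b : bool) (z w : Kfield R b) : sre (z + w) = sre z + sre w.
Proof. by case: b z w => [[? ?] [? ?]|z w]. Qed.

Lemma sre0 (b : bool) : sre (0 : Kfield R b) = 0.
Proof. by case: b. Qed.

Lemma sreN (b : bool) (z : Kfield R b) : sre (- z) = - sre z.
Proof. by case: b z => [[? ?]|z]. Qed.

Lemma sre_conj (b : bool) (z : Kfield R b) : sre (sconj z) = sre z.
Proof. by case: b z => [[? ?]|z]. Qed.

Lemma sre_ge0 (b : bool) (z : Kfield R b) : 0 <= z -> 0 <= sre z.
Proof. case: b z => [z|z] //=; by rewrite lecE => /andP[_]. Qed.

Variables (b : bool) (V : lmodType (Kfield R b)) (ip : V -> V -> Kfield R b).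
Hypothesis Hip : is_inner_product ip.

Lemma ip0l z : ip 0 z = 0.
Proof.
have := ip_linear Hip 1 0 0 z; rewrite scale1r addr0 mul1r.
by move=> /(congr1 (fun t => t - ip 0 z)); rewrite subrr addrK.
Qed.

Lemma ipDl u v z : ip (u + v) z = ip u z + ip v z.
Proof. by have := ip_linear Hip 1 u v z; rewrite scale1r mul1r. Qed.

Lemma ipNl u z : ip (- u) z = - ip u z.
Proof. by have := ip_linear Hip (-1) u 0 z; rewrite addr0 ip0l addr0 scaleN1r mulN1r. Qed.

Definition P u v := sre (ip u v).

Lemma PC u v : P u v = P v u.
Proof. by rewrite /P (ip_conj_sym Hip u v) sre_conj. Qed.

Lemma PDl u v z : P (u + v) z = P u z + P v z.
Proof. by rewrite /P ipDl sreD. Qed.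
Lemma PNl u z : P (- u) z = - P u z.
Proof. by rewrite /P ipNl sreN. Qed.
Lemma PDr u v z : P z (u + v) = P z u + P z v.
Proof. by rewrite PC PDl !(PC z). Qed.
Lemma PNr u z : P z (- u) = - P z u.
Proof. by rewrite PC PNl PC. Qed.

Lemma ipnorm2 v : ipnorm ip v ^+ 2 = P v v.
Proof.
rewrite /ipnorm sqr_sqrtr //.
have [->|Hv] := eqVneq v 0; first by rewrite ip0l sre0.
by apply: sre_ge0; apply: ltW; apply: ip_pos.
Qed.

Definition D u v := P (u - v) (u - v).

Lemma four_pt a b' c d :
  P (a - b' + c - d) (a - b' + c - d) = D a b' + D c d + D a d + D b' c - D a c - D b' d.
Proof.
rewrite /D !(PDl, PDr, PNl, PNr); ring.
Qed.

Lemma DC u v : D u v = D v u.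
Proof. rewrite /D !(PDl, PDr, PNl, PNr); ring. Qed.
End IP.

Section Coef.
Variable R : realType.

Lemma bin2R x : ('C(x, 2))%:R = (x%:R * (x%:R - 1)) / 2 :> R.
Proof.
elim: x => [|x IH]; first by rewrite mul0r mul0r.
by rewrite binS bin1 natrD IH -addn1 natrD; field.
Qed.

Lemma cijW n a b : (1 <= a)%N -> (a < b)%N -> (b <= n)%N -> cij R n a b + W R n.+1 a b = 0.
Proof.
move=> H1 H2 H3.
rewrite /cij /W !big_ord_recr big_ord0 /=.
have eo: (n - b + a - 1 = (a-1) + (n-b))%N by lia.
have em: (b - a - 1 = b - a.+1)%N by lia.
have en: (n.+1 - b.+1 = n - b)%N by lia.
rewrite eo em en subn0 subnn /= bin0 !bin1 !bin2R !natrM !natrD.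
by rewrite bin0; field.
Qed.
End Coef.

Section Final.
Variable R : realType.

Lemma cij_adj (n a b : nat) : (4 <= n)%N -> (1 <= a)%N -> (a < b)%N -> (b <= n)%N ->
  (b == a.+1) || ((a == 1)%N && (b == n)) ->
  cij R n a b = - ('C(n - 2, 2))%:R.
Proof.
move=> Hn H1 H2 H3 /orP[/eqP Hb | /andP[/eqP Ha /eqP Hb]];
  rewrite /cij !big_ord_recr big_ord0 /= subn0 subnn.
- have -> : (n - b + a - 1 = n - 2)%N by lia.
  have -> : (b - a - 1 = 0)%N by lia.
  rewrite !bin0 !bin0n /= bin1 expr1 expr2 !mulN1r ?mulr0 ?mulr1 ?mul0r.
  by rewrite add0r !addr0.
- have -> : (n - b + a - 1 = 0)%N by lia.
  have -> : (b - a - 1 = n - 2)%N by lia.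
  rewrite !bin0 !bin0n /= bin1 expr1 expr2 !mulN1r ?mulr0 ?mulr1 ?mul0r.
  by rewrite subrr !add0r exprS expr2 !mulN1r opprK ?mul1r mulN1r.
Qed.

Lemma coefL (n a b : nat) : (4 <= n)%N -> (1 <= a)%N -> (a < b)%N -> (b <= n)%N ->
  (if (1 < b - a < n - 1)%N then cij R n a b else 0) + W R n.+1 a b
  = if (b == a.+1) || ((a == 1)%N && (b == n)) then ('C(n - 2, 2))%:R else 0.
Proof.
move=> Hn H1 H2 H3.
have HW : W R n.+1 a b = - cij R n a b.
  by apply/eqP; rewrite -addr_eq0 addrC cijW.
rewrite HW; case: ifP => Hc.
  have -> : ((b == a.+1) || ((a == 1)%N && (b == n))) = false.
    apply/negbTE/negP => /orP[/eqP H| /andP[/eqP H /eqP H']]; move: Hc; lia.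
  by rewrite subrr.
have Ha : (b == a.+1) || ((a == 1)%N && (b == n)).
  move: Hc; case: (boolP (b == a.+1)) => //= /eqP Hb1 Hc.
  apply/andP; split; apply/eqP; move: Hc Hb1; lia.
by rewrite Ha add0r (cij_adj Hn H1 H2 H3 Ha) opprK.
Qed.
End Final.

Section Adj.
Variable R : realType.

Lemma S2add (f g : nat -> nat -> R) N : S2 f N + S2 g N = S2 (fun a b => f a b + g a b) N.
Proof.
rewrite /S2 -big_split; apply: eq_bigr => a _; by rewrite -big_split.
Qed.

Lemma adj_sum (F : nat -> nat -> R) (c : R) (n : nat) : (4 <= n)%N ->
  S2 (fun a b => (if (b == a.+1) || ((a == 1)%N && (b == n)) then c else 0) * F a b) n.+1
  = c * (\sum_(1 <= a < n) F a a.+1 + F 1%N n).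
Proof.
move=> Hn; rewrite /S2 big_nat_recr /=; last lia.
rewrite [X in _ + X]big_geq // addr0.
rewrite (eq_big_nat _ _ (F2 := fun a => c * F a a.+1 + (if a == 1%N then c * F 1%N n else 0))).
  rewrite big_split /= mulrDr -mulr_sumr; congr (_ + _).
  rewrite big_ltn; last lia.
  rewrite eqxx big_nat_cond big1 ?addr0 // => a /andP[/andP[Ha _] _].
  by have -> : (a == 1%N) = false by apply/negbTE; rewrite neq_ltn Ha orbT.
move=> a /andP[Ha1 Ha2].
rewrite big_ltn; last lia.
rewrite eqxx /=; congr (_ + _).
case: (eqVneq a 1%N) => Ha.
- subst a; rewrite big_nat_recr /=; last lia.
  rewrite eqxx orbT big_nat_cond big1 ?add0r // => b /andP[/andP[Hb0 Hb] _].
  have -> : (b == 2%N) = false by apply/negbTE; rewrite neq_ltn; apply/orP; right; lia.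
  have -> : (b == n) = false by apply/negbTE; rewrite neq_ltn Hb.
  by rewrite /= mul0r.
- rewrite (eq_big_nat _ _ (F2 := fun=> 0)) ?big1 // => b /andP[Hb _].
  have -> : (b == a.+1) = false by apply/negbTE; rewrite neq_ltn; apply/orP; right; lia.
  by rewrite /= mul0r.
Qed.
End Adj.

Theorem theorem3p2 (R : realType) (b : bool) (V : lmodType (Kfield R b))
    (ip : V -> V -> Kfield R b) (Hip : is_inner_product ip)
    (n : nat) (Hn : (4 <= n)%N) (x : nat -> V) :
  let xx i := if i == n.+1 then x 1%N else x i in
  ('C(n - 2, 2))%:R * \sum_(1 <= i < n.+1) ipnorm ip (xx i - xx i.+1) ^+ 2
  = \sum_(1 <= i < n.+1) \sum_(i.+1 <= j < n.+1 | (1 < j - i < n - 1)%N)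
        cij R n i j * ipnorm ip (x i - x j) ^+ 2
    + \sum_(1 <= i < n.+1) \sum_(i.+1 <= j < n.+1) \sum_(j.+1 <= k < n.+1)
        \sum_(k.+1 <= l < n.+1) ipnorm ip (x i - x j + x k - x l) ^+ 2.
Proof.
move=> xx.
pose F a b := D ip (x a) (x b).
have Hq : \sum_(1 <= i < n.+1) \sum_(i.+1 <= j < n.+1) \sum_(j.+1 <= k < n.+1)
        \sum_(k.+1 <= l < n.+1) ipnorm ip (x i - x j + x k - x l) ^+ 2
    = Q4 (fun i j k l => F i j + F k l + F i l + F j k - F i k - F j l) n.+1.
  apply: eq_bigr => i _; apply: eq_bigr => j _; apply: eq_bigr => k _; apply: eq_bigr => l _.
  by rewrite (ipnorm2 Hip) (four_pt Hip).
have Hc : \sum_(1 <= i < n.+1) \sum_(i.+1 <= j < n.+1 | (1 < j - i < n - 1)%N)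
        cij R n i j * ipnorm ip (x i - x j) ^+ 2
    = S2 (fun a b => (if (1 < b - a < n - 1)%N then cij R n a b else 0) * F a b) n.+1.
  apply: eq_bigr => i _; rewrite big_mkcond; apply: eq_bigr => j _.
  by rewrite (ipnorm2 Hip); case: ifP; rewrite ?mul0r.
rewrite Hq Q4comb Hc S2add.
have -> : S2 (fun a b => (if (1 < b - a < n - 1)%N then cij R n a b else 0) * F a b
                         + W R n.+1 a b * F a b) n.+1
    = S2 (fun a b => (if (b == a.+1) || ((a == 1)%N && (b == n)) then ('C(n - 2, 2))%:R else 0)
                     * F a b) n.+1.
  apply: eq_big_nat => a /andP[Ha1 Ha2]; apply: eq_big_nat => c /andP[Hc1 Hc2].
  rewrite -mulrDl coefL //; lia.
rewrite adj_sum //; congr (_ * _).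
rewrite big_nat_recr /=; last lia.
congr (_ + _).
  apply: eq_big_nat => i /andP[Hi1 Hi2].
  rewrite /xx (ipnorm2 Hip).
  have -> : (i == n.+1) = false by apply/negbTE; rewrite neq_ltn; apply/orP; left; lia.
  by have -> : (i.+1 == n.+1) = false by apply/negbTE; rewrite neq_ltn; apply/orP; left; lia.
rewrite /xx (ipnorm2 Hip) eqxx.
have -> : (n == n.+1) = false by apply/negbTE; rewrite neq_ltn; apply/orP; left; lia.
by rewrite /F (DC Hip).
Qed.
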